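(* Let $X,Y$ be Banach spaces over $\mathbb{K}\in\{\mathbb{R},\mathbb{C}\}$ and let $G\in L(X,Y)$ with $\|G\|=1$. Then for each $T\in L(X,Y)$ the following are equivalent: (i) $\max_{\omega\in S^1}\|G+\omega T\|_G = 1+\|T\|_G$; (ii) $\nu_G(T)=\|T\|_G$.
   Context: $S^1=\{\lambda\in\mathbb{K}:|\lambda|=1\}$; $S_X$ is the unit sphere of $X$, $Y^*$ the dual of $Y$. For $T\in L(X,Y)$: $\|T\|_G := \inf_{\delta>0}\sup\{\|Tx\|: x\in S_X,\ \|Gx\|>1-\delta\}$; $V_G(T):=\bigcap_{\delta>0}\overline{\{y^*(Tx): x\in S_X,\ y^*\in S_{Y^*},\ \operatorname{Re} y^*(Gx)>1-\delta\}}$ and $\nu_G(T):=\max\{|\lambda|:\lambda\in V_G(T)\}$. Standing assumption of the paper: $\|\cdot\|_G$ is a norm on $L(X,Y)$. *)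

(* Defs.v *)
From HB Require Import structures.
From mathcomp Require Import all_boot all_order all_algebra.
From mathcomp Require Import all_classical all_reals all_analysis.
From mathcomp Require complex.
Import complex.ComplexField.
Import Order.TTheory GRing.Theory Num.Theory.
Import numFieldNormedType.Exports.

Set Implicit Arguments.
Unset Strict Implicit.
Unset Printing Implicit Defensive.

Local Open Scope ring_scope.
Local Open Scope classical_set_scope.

(* Generic setting: scalar field K (later K = R or K = R[i]) with a
   real-part map [re : K -> R] used to read off real numbers from
   K-valued norms and for "Re y*(Gx)". *)
Section NumericalIndex.
Context (R : realType) (K : numFieldType) (re : K -> R).

Definition bdd_linear (U V : normedModType K) (f : U -> V) : Prop :=
  (forall (a : K) (u v : U), f (a *: u + v) = a *: f u + f v) /\ continuous f.

Definition opnorm (U V : normedModType K) (f : U -> V) : \bar R :=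
  ereal_sup [set (re `|f x|)%:E | x in [set x : U | `|x| = 1]].

Context (X Y : normedModType K).

Definition dual_sphere : set (Y -> K^o) :=
  [set ys | bdd_linear ys /\ opnorm ys = 1%:E].

Definition Gnorm (G T : X -> Y) : \bar R :=
  ereal_inf [set ereal_sup [set (re `|T x|)%:E
                           | x in [set x : X | `|x| = 1 /\ 1 - d < re `|G x|]]
            | d in [set d : R | 0 < d]].

Definition Gnumset (G T : X -> Y) (d : R) : set K :=
  [set l | exists x : X, exists ys : Y -> K^o,
     [/\ `|x| = 1, dual_sphere ys, 1 - d < re (ys (G x)) & l = ys (T x)]].

Definition Gnumrange (G T : X -> Y) : set K :=
  [set l | forall d : R, 0 < d -> closure (Gnumset G T d) l].

(* nu_G(T) = max { |l| : l in V_G(T) } (rendered as a sup) *)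
Definition Gnumradius (G T : X -> Y) : \bar R :=
  ereal_sup [set (re `|l|)%:E | l in Gnumrange G T].

Definition Gnorm_is_norm (G : X -> Y) : Prop :=
  forall S T : X -> Y, bdd_linear S -> bdd_linear T ->
  [/\ Gnorm G T \is a fin_num,
      (Gnorm G (fun x => (S x + T x)%R) <= Gnorm G S + Gnorm G T)%E,
      (forall a : K, Gnorm G (fun x => (a *: T x)%R) = ((re `|a|)%:E * Gnorm G T)%E)
    & (Gnorm G T = 0%E -> forall x, T x = 0)].

End NumericalIndex.

Definition thm3p1_for (R : realType) (K : numFieldType) (re : K -> R) : Prop :=
  forall (X Y : completeNormedModType K) (G T : X -> Y),
    bdd_linear G -> opnorm re G = 1%:E -> Gnorm_is_norm re G ->
    bdd_linear T ->
    (ereal_sup [set Gnorm re G (fun x => G x + w *: T x) | w in [set w : K | `|w| = 1]]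
       = (1%:E + Gnorm re G T)%E
     <-> Gnumradius re G T = Gnorm re G T).

(* Main.v *)
Require Import Defs.
From HB Require Import structures.
From mathcomp Require Import all_boot all_order all_algebra.
From mathcomp Require Import all_classical all_reals all_analysis.
From mathcomp Require complex.
Import complex.ComplexField.
From mathcomp Require Import ring lra.
Import Order.TTheory GRing.Theory Num.Theory.
Import numFieldNormedType.Exports.
Local Open Scope ring_scope.
Local Open Scope classical_set_scope.
Set Implicit Arguments. Unset Strict Implicit. Unset Printing Implicit Defensive.
Section Generic.
Variables (R : realType) (K : numFieldType) (re : K -> R).
Hypothesis reD : forall a b, re (a + b) = re a + re b.
Hypothesis re_le_norm : forall a, re a <= re `|a|.
Hypothesis re_mono : forall a b : K, a <= b -> re a <= re b.
Hypothesis re_lt : forall a b : K, a < b -> re a < re b.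
Hypothesis reM_ge0 : forall a b : K, 0 <= a -> 0 <= b -> re (a * b) = re a * re b.
Hypothesis re1 : re 1 = 1.
Hypothesis re_lt_conv : forall a b : K, 0 <= a -> 0 < b -> re a < re b -> a < b.
Variable emb : R -> K.
Hypothesis emb_pos : forall e, 0 < e -> 0 < emb e.
Hypothesis re_emb : forall e, re (emb e) = e.

Lemma re0 : re 0 = 0.
Proof. by have := reD 0 0; rewrite addr0 => /eqP; rewrite -subr_eq subrr eq_sym => /eqP. Qed.

Lemma reN a : re (- a) = - re a.
Proof. by apply/eqP; rewrite -subr_eq0 opprK -reD addNr re0. Qed.

Lemma reB a b : re (a - b) = re a - re b.
Proof. by rewrite reD reN. Qed.

Lemma nK_ge0 (a : K) : 0 <= re `|a|.
Proof. by rewrite -re0; apply: re_mono. Qed.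

Lemma re_ge_nnorm a : - re `|a| <= re a.
Proof. by rewrite lerNl -reN -normrN re_le_norm. Qed.

Lemma nKM (a b : K) : re `|a * b| = re `|a| * re `|b|.
Proof. by rewrite normrM reM_ge0. Qed.

Lemma nKD (a b : K) : re `|a + b| <= re `|a| + re `|b|.
Proof. by rewrite -reD; apply: re_mono; apply: ler_normD. Qed.

Section Normed.
Variable Y : normedModType K.
Lemma nY_ge0 (y : Y) : 0 <= re `|y|.
Proof. by rewrite -re0; apply: re_mono. Qed.
Lemma nYD (x y : Y) : re `|x + y| <= re `|x| + re `|y|.
Proof. by rewrite -reD; apply: re_mono; apply: ler_normD. Qed.
Lemma nYZ (a : K) (y : Y) : re `|a *: y| = re `|a| * re `|y|.
Proof. by rewrite normrZ reM_ge0. Qed.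
Lemma nYN (y : Y) : re `|- y| = re `|y|.
Proof. by rewrite normrN. Qed.
End Normed.

Lemma closureP_re (A : set K) l :
  closure A l <-> forall e : R, 0 < e -> exists a, A a /\ re `|a - l| < e.
Proof.
split.
- move=> cl e e0.
  have : nbhs l (ball l (emb e)) by apply: nbhsx_ballx; exact: emb_pos.
  move=> /cl [a [Aa]]; rewrite -ball_normE /= => h.
  by exists a; split => //; rewrite distrC -(re_emb e); apply: re_lt.
- move=> h B /nbhs_ballP [e /= e0 eB].
  have re0' : 0 < re e by rewrite -re0; apply: re_lt.
  have [a [Aa ha]] := h _ re0'.
  exists a; split => //; apply: eB; rewrite -ball_normE /=.
  by rewrite distrC; apply: re_lt_conv.
Qed.


Section Dual.
Variable Y : normedModType K.

Lemma lin0 (f : Y -> K^o) : (forall (a : K) (u v : Y), f (a *: u + v) = a *: f u + f v) ->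
  f 0 = 0.
Proof.
move=> lf; have := lf 1 0 0; rewrite !scale1r addr0.
by move/eqP; rewrite -subr_eq subrr eq_sym => /eqP.
Qed.

Lemma linB (f : Y -> K^o) : (forall (a : K) (u v : Y), f (a *: u + v) = a *: f u + f v) ->
  forall u v, f (u - v) = f u - f v.
Proof.
move=> lf u v; apply/eqP; rewrite eq_sym subr_eq.
by have := lf 1 (u - v) v; rewrite !scale1r subrK => ->.
Qed.

Lemma linZ (f : Y -> K^o) : (forall (a : K) (u v : Y), f (a *: u + v) = a *: f u + f v) ->
  forall a u, f (a *: u) = a * f u.
Proof. by move=> lf a u; have := lf a u 0; rewrite addr0 (lin0 lf) addr0. Qed.

Lemma dual_bound (ys : Y -> K^o) : dual_sphere re ys -> forall y, re `|ys y| <= re `|y|.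
Proof.
move=> [[lf _] on1] y.
have [->|y0] := eqVneq y 0; first by rewrite (lin0 lf) !normr0.
have ny : `|y| \is a GRing.unit by rewrite unitfE normr_eq0.
set u := `|y|^-1 *: y.
have u1 : `|u| = 1 by apply: normrZV.
have : ((re `|ys u|)%:E <= 1)%E.
  by rewrite -on1; apply: ereal_sup_ubound; exists u.
rewrite lee_fin => h.
have -> : y = `|y| *: u by rewrite /u scalerA divrr // scale1r.
rewrite (linZ lf) nKM normr_id nYZ u1 re1 mulr1.
by rewrite normr_id -[X in _ <= X]mulr1; apply: ler_wpM2l => //; apply: nY_ge0.
Qed.

Lemma mk_dual (f : Y -> K) (y : Y) : y != 0 ->
  (forall a u v, f (a *: u + v) = a * f u + f v) ->
  (forall v, `|f v| <= `|v|) -> re (f y) = re `|y| ->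
  dual_sphere re (f : Y -> K^o).
Proof.
move=> y0 lf bf fy.
have lf' : forall (a : K) (u v : Y), (f : Y -> K^o) (a *: u + v) = a *: (f : Y -> K^o) u + f v.
  by [].
split; first split => //.
- move=> x; apply/cvgrPdist_lt => e e0; near=> t.
  rewrite -(linB lf'); apply: (le_lt_trans (bf _)).
  near: t; by apply: (cvgr_dist_lt id).  
- apply/eqP; rewrite eq_le; apply/andP; split.
  + apply/ereal_supP => _ [x /= x1 <-]; rewrite lee_fin -re1 -x1.
    by apply: re_mono; apply: bf.
  + have ny : `|y| \is a GRing.unit by rewrite unitfE normr_eq0.
    apply: ereal_sup_ubound; exists (`|y|^-1 *: y); first exact: normrZV.
    have eq1 : re `|f y| = re `|y|.
      apply/eqP; rewrite eq_le; apply/andP; split; first by apply: re_mono.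
      by rewrite -fy re_le_norm.
    congr (_ %:E).
    rewrite (linZ lf') normrM ger0_norm ?invr_ge0 ?normr_ge0 //.
    rewrite reM_ge0 ?invr_ge0 ?normr_ge0 // eq1 -reM_ge0 ?invr_ge0 ?normr_ge0 //.
    by rewrite mulVr.
Unshelve. all: by end_near.
Qed.
End Dual.


Section Main.
Variables (X Y : normedModType K) (G : X -> Y).
Hypothesis opG : opnorm re G = 1%:E.

Let sset (S : X -> Y) (d : R) :=
  [set (re `|S x|)%:E | x in [set x : X | `|x| = 1 /\ 1 - d < re `|G x|]].

Lemma GnormE S : Gnorm re G S = ereal_inf [set ereal_sup (sset S d) | d in [set d : R | 0 < d]].
Proof. by []. Qed.

Lemma Gnorm_le_sup S d : 0 < d -> (Gnorm re G S <= ereal_sup (sset S d))%E.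
Proof. by move=> d0; apply: ereal_inf_lbound; exists d. Qed.

Lemma sup_lt S e : Gnorm re G S \is a fin_num -> 0 < e ->
  exists2 d, 0 < d & (ereal_sup (sset S d) < Gnorm re G S + e%:E)%E.
Proof.
move=> fin e0; have [_ [d d0 <-] h] := lb_ereal_inf_adherent e0 fin.
by exists d.
Qed.

Lemma sup_mono S d d' : d <= d' -> (ereal_sup (sset S d) <= ereal_sup (sset S d'))%E.
Proof.
move=> dd; apply: ereal_sup_le => _ [x [x1 hx] <-]; exists x => //; split => //.
by apply: le_lt_trans hx; rewrite lerB.
Qed.

Lemma in_sset S d x : `|x| = 1 -> 1 - d < re `|G x| ->
  ((re `|S x|)%:E <= ereal_sup (sset S d))%E.
Proof. by move=> x1 hx; apply: ereal_sup_ubound; exists x. Qed.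

Lemma sset_gt S d r : (r%:E < ereal_sup (sset S d))%E ->
  exists x, [/\ `|x| = 1, 1 - d < re `|G x| & r < re `|S x|].
Proof.
by move=> /ereal_sup_gt [_ [x [x1 hx] <-]]; rewrite lte_fin => h; exists x.
Qed.

Lemma G_le1 x : `|x| = 1 -> re `|G x| <= 1.
Proof.
by move=> x1; rewrite -lee_fin -opG; apply: ereal_sup_ubound; exists x.
Qed.

Lemma G_near d : 0 < d -> exists x, `|x| = 1 /\ 1 - d < re `|G x|.
Proof.
move=> d0; have : ((1 - d)%:E < opnorm re G)%E by rewrite opG lte_fin gtrBl.
by move=> /ereal_sup_gt [_ [x x1 <-]]; rewrite lte_fin => h; exists x.
Qed.

Lemma Gnorm_ge0 S : (0 <= Gnorm re G S)%E.
Proof.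
apply/ereal_infP => _ [d d0 <-]; have [x [x1 hx]] := G_near d0.
by apply: le_trans (in_sset S x1 hx); rewrite lee_fin nY_ge0.
Qed.

Lemma GnormG_le1 : (Gnorm re G G <= 1)%E.
Proof.
apply: le_trans (Gnorm_le_sup G ltr01) _.
by apply/ereal_supP => _ [x [x1 _] <-]; rewrite lee_fin G_le1.
Qed.

Lemma Gnumset_mono T d d' : d <= d' -> Gnumset re G T d `<=` Gnumset re G T d'.
Proof.
move=> dd l [x [ys [x1 ds h ->]]]; exists x, ys; split => //.
by apply: le_lt_trans h; rewrite lerB.
Qed.

Lemma Gnumset_elt T d l : Gnumset re G T d l ->
  exists x, [/\ `|x| = 1, 1 - d < re `|G x| & re `|l| <= re `|T x|].
Proof.
move=> [x [ys [x1 ds h ->]]]; exists x; split => //; last exact: dual_bound.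
apply: lt_le_trans h _; apply: le_trans (re_le_norm _) _; exact: dual_bound.
Qed.

Lemma nu_le T : Gnorm re G T \is a fin_num -> (Gnumradius re G T <= Gnorm re G T)%E.
Proof.
move=> fin; rewrite -(fineK fin); set nr := fine _.
apply/ereal_supP => _ [l Vl <-]; rewrite lee_fin.
apply/ler_addgt0Pr => e e0.
have e20 : 0 < e / 2 by rewrite divr_gt0.
have [d d0] := sup_lt fin e20; rewrite -(fineK fin) -/nr => hd.
have [a [Na la]] := (closureP_re _ _).1 (Vl d d0) _ e20.
have [x [x1 hx ha]] := Gnumset_elt Na.
have := le_lt_trans (in_sset T x1 hx) hd; rewrite lte_fin => hT.
have : re `|l| <= re `|a| + re `|l - a|.
  by have := nKD a (l - a); rewrite addrC subrK.
rewrite distrC; lra.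
Qed.


Hypothesis polar : forall l : K, exists w : K, `|w| = 1 /\ re (w * l) = re `|l|.
Hypothesis BW : forall (F : R -> set K) (M : R),
  (forall d d', 0 < d -> d <= d' -> F d `<=` F d') ->
  (forall d, 0 < d -> exists a, F d a) ->
  (forall d a, 0 < d -> F d a -> re `|a| <= M) ->
  exists l, forall d e, 0 < d -> 0 < e -> exists a, F d a /\ re `|a - l| < e.
Hypothesis HBK : forall (y : Y), y != 0 -> exists f : Y -> K,
  [/\ (forall a u v, f (a *: u + v) = a * f u + f v),
      (forall v, `|f v| <= `|v|) & re (f y) = re `|y|].

Lemma bdd_scale (T : X -> Y) w : bdd_linear T -> bdd_linear (fun x => w *: T x).
Proof.
move=> [lT cT]; split.
- by move=> a u v; rewrite lT scalerDr !scalerA mulrC.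
- move=> x; apply: continuousZ; [exact: cvg_cst | exact: cT].
Qed.

Theorem main_generic (T : X -> Y) : bdd_linear G -> Gnorm_is_norm re G -> bdd_linear T ->
    (ereal_sup [set Gnorm re G (fun x => G x + w *: T x) | w in [set w : K | `|w| = 1]]
       = (1%:E + Gnorm re G T)%E
     <-> Gnumradius re G T = Gnorm re G T).
Proof.
move=> bG nG bT.
have [finT _ hom _] := nG T T bT bT.
have nE : Gnorm re G T = (fine (Gnorm re G T))%:E by rewrite fineK.
set nr := fine (Gnorm re G T) in nE.
have nr0 : 0 <= nr by rewrite -lee_fin -nE Gnorm_ge0.
have Wle : forall w : K, `|w| = 1 ->
    (Gnorm re G (fun x => (G x + w *: T x)%R) <= 1 + Gnorm re G T)%E.
  move=> w w1; have bwT := bdd_scale w bT.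
  have [_ tri hom' _] := nG G (fun x => w *: T x) bG bwT.
  apply: le_trans tri _; rewrite hom w1 re1 mul1e.
  by apply: leeD2r; apply: GnormG_le1.
rewrite nE; split.
- move=> hW; apply/eqP; rewrite eq_le; apply/andP; split.
    by rewrite -nE; apply: nu_le.
  apply/lee_subgt0Pr => dl dl0; rewrite -EFinB.
  have [d1 d10] := sup_lt finT ltr01; rewrite nE => hd1.
  pose F d := [set a | Gnumset re G T (Num.min d d1) a /\ nr - dl <= re `|a|].
  have [l hl] : exists l, forall d e, 0 < d -> 0 < e -> exists a, F d a /\ re `|a - l| < e.
    apply: (BW (M := nr + 1)).
    - move=> d d' d0 dd a [Na ha]; split => //; apply: Gnumset_mono Na.
      by rewrite le_min !ge_min dd lexx orbT.
    - move=> d d0.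
      have dd0 : 0 < Num.min d d1 by rewrite lt_min d0 d10.
      set dd := Num.min d d1 in dd0 *.
      pose eps := Num.min (Num.min dl (dd / 2)) (1 / 2).
      have h2 : 0 < dd / 2 by rewrite divr_gt0.
      have h3 : 0 < 1 / 2 :> R by rewrite divr_gt0.
      have eps0 : 0 < eps by rewrite !lt_min dl0 h2 h3.
      have epsdl : eps <= dl by rewrite /eps !ge_min lexx.
      have epsdd : eps <= dd / 2 by rewrite /eps !ge_min lexx orbT.
      have epsh : eps <= 1 / 2 by rewrite /eps !ge_min lexx orbT.
      have : ((1 + nr - eps)%:E < 1%:E + nr%:E)%E.
        by rewrite -EFinD lte_fin gtrBl.
      rewrite -hW => /ereal_sup_gt [_ [w w1 <-] hw].
      have [d0' d00'] := sup_lt finT eps0; rewrite nE => hd0.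
      have := lt_le_trans hw (Gnorm_le_sup _ d00').
      move=> /sset_gt [x [x1 hGx hy]].
      have := le_lt_trans (in_sset T x1 hGx) hd0; rewrite -EFinD lte_fin => hTx.
      have y0 : G x + w *: T x != 0.
        apply/eqP => y0; move: hy; rewrite y0 normr0 re0; lra.
      have [f [lf bf fy]] := HBK y0.
      have ds := mk_dual y0 lf bf fy.
      have fyE : f (G x + w *: T x) = f (G x) + w * f (T x).
        by rewrite addrC lf addrC.
      have h1 : re (w * f (T x)) <= re `|T x|.
        apply: le_trans (re_le_norm _) _; rewrite nKM w1 re1 mul1r.
        exact: dual_bound ds _.
      have h2' : re (f (G x)) <= 1.
        apply: le_trans (re_le_norm _) _; apply: le_trans (G_le1 x1).
        exact: dual_bound ds _.
      have h3' : re `|f (T x)| >= re (w * f (T x)).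
        apply: le_trans (re_le_norm _) _; by rewrite nKM w1 re1 mul1r.
      move: hy; rewrite -fy fyE reD => hy.
      exists (f (T x)); split.
        exists x, (f : Y -> K^o); split => //; rewrite -/dd; lra.
      lra.
    - move=> d a d0 [Na _].
      have [x [x1 hGx ha]] := Gnumset_elt Na.
      have hGx' : 1 - d1 < re `|G x|.
        by apply: le_lt_trans hGx; rewrite lerB // ge_min lexx orbT.
      have := le_lt_trans (in_sset T x1 hGx') hd1; rewrite -EFinD lte_fin => hTx.
      lra.
  have Vl : Gnumrange re G T l.
    move=> d d0; apply/closureP_re => e e0.
    have [a [[Na _] ha]] := hl d e d0 e0.
    by exists a; split => //; apply: Gnumset_mono Na; rewrite ge_min lexx.
  have hl' : nr - dl <= re `|l|.
    apply/ler_addgt0Pr => e e0.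
    have [a [[_ ha] hal]] := hl 1 e ltr01 e0.
    have := nKD l (a - l); rewrite addrC subrK; lra.
  apply: le_trans (_ : (re `|l|)%:E <= _)%E; first by rewrite lee_fin.
  by apply: ereal_sup_ubound; exists l.
- move=> hnu; apply/eqP; rewrite eq_le; apply/andP; split.
    by apply/ereal_supP => _ [w w1 <-]; rewrite -nE; apply: Wle.
  apply/lee_subgt0Pr => e e0.
  have e30 : 0 < e / 3 by rewrite divr_gt0.
  have : ((nr - e / 3)%:E < Gnumradius re G T)%E by rewrite hnu lte_fin gtrBl.
  move=> /ereal_sup_gt [_ [l Vl <-]]; rewrite lte_fin => hl.
  have [w [w1 hw]] := polar l.
  apply: (@le_trans _ _ (Gnorm re G (fun x => (G x + w *: T x)%R))); last first.
    by apply: ereal_sup_ubound; exists w.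
  apply/ereal_infP => _ [d d0 <-].
  have dd0 : 0 < Num.min d (e / 3) by rewrite lt_min d0 e30.
  have [a [Na ha]] := (closureP_re _ _).1 (Vl _ dd0) _ e30.
  case: Na => x [ys [x1 ds h ->]] in ha *.
  have [[lys _] _] := ds.
  have hGx : 1 - d < re `|G x|.
    apply: (@le_lt_trans _ _ (1 - Num.min d (e / 3))); first by rewrite lerB // ge_min lexx.
    apply: lt_le_trans h _; apply: le_trans (re_le_norm _) _; exact: dual_bound.
  apply: le_trans (in_sset _ x1 hGx).
  have -> : (1 + nr%:E - e%:E = (1 + nr - e)%:E)%E by rewrite EFinB EFinD.
  rewrite lee_fin.
  have hdd : Num.min d (e / 3) <= e / 3 by rewrite ge_min lexx orbT.
  have e1 : re `|ys (G x + w *: T x)| <= re `|G x + w *: T x| by apply: dual_bound.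
  have e2 : re (ys (G x + w *: T x)) = re (ys (G x)) + re (w * ys (T x)).
    by rewrite addrC lys addrC reD.
  have e3 : re (w * ys (T x)) >= re `|l| - re `|ys (T x) - l|.
    have -> : w * ys (T x) = w * l + w * (ys (T x) - l) by rewrite -mulrDr addrC subrK.
    rewrite reD hw; have := re_ge_nnorm (w * (ys (T x) - l)).
    rewrite nKM w1 re1 mul1r; lra.
  have e4 := re_le_norm (ys (G x + w *: T x)).
  lra.
Qed.

End Main.
End Generic.

Section HBcore.
Variables (R : realType) (V : zmodType) (sc : R -> V -> V) (p : V -> R).
Hypothesis scD : forall t x y, sc t (x + y) = sc t x + sc t y.
Hypothesis scDl : forall s t x, sc (s + t) x = sc s x + sc t x.
Hypothesis scA : forall s t x, sc s (sc t x) = sc (s * t) x.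
Hypothesis sc1 : forall x, sc 1 x = x.
Hypothesis pD : forall x y, p (x + y) <= p x + p y.
Hypothesis pZ : forall t x, p (sc t x) = `|t| * p x.

Lemma sc0 x : sc 0 x = 0.
Proof. by have := scDl 0 0 x; rewrite addr0 => /eqP; rewrite -subr_eq subrr eq_sym => /eqP. Qed.
Lemma scN t x : sc (- t) x = - sc t x.
Proof. by apply/eqP; rewrite -subr_eq0 opprK -scDl addNr sc0. Qed.
Lemma scNx x : sc (-1) x = - x.
Proof. by rewrite scN sc1. Qed.
Lemma scx0 t : sc t 0 = 0.
Proof. by rewrite -(sc0 0) scA mulr0. Qed.
Lemma scB t x y : sc t (x - y) = sc t x - sc t y.
Proof. by rewrite scD -scNx scA mulrN1 scN. Qed.
Lemma p0 : p 0 = 0.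
Proof. by rewrite -(sc0 0) pZ normr0 mul0r. Qed.
Lemma p_ge0 x : 0 <= p x.
Proof.
have := pD x (- x); rewrite subrr p0 -scNx pZ normrN normr1 mul1r; lra.
Qed.

Lemma properI (T : Type) (A B : set T) : A `<=` B -> (exists q, B q /\ ~ A q) -> A `<` B.
Proof. by move=> AB [q [Bq nAq]]; split => // BA; apply: nAq; apply: BA. Qed.

Definition good (A : set (V * R)) :=
  [/\ (forall x r r', A (x, r) -> A (x, r') -> r = r'),
      (forall x r y s, A (x, r) -> A (y, s) -> A (x + y, r + s)),
      (forall t x r, A (x, r) -> A (sc t x, t * r)) &
      (forall x r, A (x, r) -> r <= p x)].

Variable y0 : V.
Let A0 : set (V * R) := [set (sc t y0, t * p y0) | t in [set: R]].

Lemma good_A0 : good A0.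
Proof.
split.
- move=> x r r' [t _ [<- <-]] [t' _ []] e <-.
  have [->//|tt] := eqVneq t t'.
  have : sc (t - t') y0 = 0 by rewrite scDl scN e subrr.
  move=> /(congr1 (sc (t - t')^-1)); rewrite scA mulVf ?subr_eq0 // sc1 scx0 => ->.
  by rewrite p0 !mulr0.
- move=> x r y s [t _ [<- <-]] [t' _ [<- <-]].
  by exists (t + t') => //; rewrite scDl mulrDl.
- move=> a x r [t _ [<- <-]]; by exists (a * t) => //; rewrite scA mulrA.
- move=> x r [t _ [<- <-]]; rewrite pZ; apply: ler_wpM2r; first exact: p_ge0.
  exact: ler_norm.
Qed.

Let P (A : set (V * R)) := good A /\ (A = set0 \/ A0 `<=` A).

Lemma chainP (F : set (set (V * R))) : F `<=` P -> total_on F subset ->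
  P (\bigcup_(X in F) X).
Proof.
move=> FP tot.
have two : forall q q', (\bigcup_(X in F) X) q -> (\bigcup_(X in F) X) q' ->
    exists X, [/\ F X, X q & X q'].
  move=> q q' [X FX Xq] [X' FX' Xq'].
  have [XX'|X'X] := tot _ _ FX FX'.
  + by exists X'; split => //; apply: XX'.
  + by exists X; split => //; apply: X'X.
split; first split.
- move=> x r r' h1 h2; have [X [FX X1 X2]] := two _ _ h1 h2.
  by have [[f _ _ _] _] := FP _ FX; apply: f X1 X2.
- move=> x r y s h1 h2; have [X [FX X1 X2]] := two _ _ h1 h2.
  by have [[_ a _ _] _] := FP _ FX; exists X => //; apply: a X1 X2.
- move=> t x r [X FX X1]; have [[_ _ s _] _] := FP _ FX.
  by exists X => //; apply: s.
- move=> x r [X FX X1]; have [[_ _ _ d] _] := FP _ FX; exact: d X1.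
- have [[X [FX A0X]]|] := pselect (exists X, F X /\ A0 `<=` X).
    by right => q A0q; exists X => //; apply: A0X.
  move=> nX; left; apply/seteqP; split => // q [X FX Xq].
  have [_ [X0|A0X]] := FP _ FX; first by rewrite X0 in Xq.
  by exfalso; apply: nX; exists X.
Qed.

Theorem HB_core : exists u : V -> R,
  [/\ (forall x y, u (x + y) = u x + u y), (forall t x, u (sc t x) = t * u x),
      (forall x, u x <= p x) & u y0 = p y0].
Proof.
have [A [[gA A0A] maxA]] := Zorn_bigcup chainP.
have {}A0A : A0 `<=` A.
  case: A0A => // A0E; exfalso; apply: (maxA A0); last by split; [exact: good_A0 | right].
  rewrite A0E; apply: properI => //; exists (y0, p y0); split => //.
  by exists 1 => //; rewrite sc1 mul1r.
case: gA => fA aA sA dA.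
have A00 : A (0, 0).
  have : A (sc 0 y0, 0 * p y0) by apply: A0A; exists 0.
  by rewrite sc0 mul0r.
have tot : forall z, exists r, A (z, r).
  move=> z; apply: contrapT => nz.
  have nz' : forall r, ~ A (z, r) by move=> r Ar; apply: nz; exists r.
  pose S' := [set q.2 - p (q.1 - z) | q in A].
  have key : forall x r y s, A (x, r) -> A (y, s) -> r - p (x - z) <= p (y + z) - s.
    move=> x r y s Ax Ay; have := dA _ _ (aA _ _ _ _ Ax Ay).
    have := pD (x - z) (y + z); rewrite addrCA subrK addrC.
    move=> h1 h2; have := le_trans h2 h1; lra.
  have S'0 : S' !=set0 by exists (0 - p (0 - z)); exists (0, 0).
  have S'ub : ubound S' (p (0 + z) - 0).
    by move=> _ [[x r] Ax <-]; apply: key.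
  pose c := sup S'.
  have c1 : forall x r, A (x, r) -> r - p (x - z) <= c.
    move=> x r Ax; apply: sup_upper_bound; last by exists (x, r).
    by split => //; exists (p (0 + z) - 0).
  have c2 : forall y s, A (y, s) -> c <= p (y + z) - s.
    move=> y s Ay; apply: ge_sup => // _ [[x r] Ax <-]; exact: key.
  pose B : set (V * R) := [set q | exists x r t, A (x, r) /\ q = (x + sc t z, r + t * c)].
  have AB : A `<=` B.
    by move=> [x r] Ax; exists x, r, 0; split => //; rewrite sc0 mul0r !addr0.
  apply: (maxA B).
    apply: properI => //; exists (z, c); split.
      by exists 0, 0, 1; split => //; rewrite sc1 mul1r !add0r.
    by move=> Az; apply: (nz' c).
  split; last by right; apply: subset_trans AB.
  split.
  - move=> w r1 r2 [x [r [t [Ax [-> ->]]]]] [x' [r' [t' [Ax' []]]]] e ->.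
    have [tt|tt] := eqVneq t t'.
      move: e; rewrite tt => /addIr ex; rewrite ex in Ax.
      by rewrite (fA _ _ _ Ax Ax').
    exfalso.
    have e2 : sc (t - t') z = x' - x.
      rewrite scDl scN; have -> : sc t z = x' + sc t' z - x by rewrite -e addrC addKr.
      by rewrite addrAC addrK.
    have Ad : A (x' - x, r' - r).
      by apply: aA => //; rewrite -scNx -[X in A (_, X)]mulN1r; apply: sA.
    apply: (nz' ((t - t')^-1 * (r' - r))).
    have -> : z = sc (t - t')^-1 (x' - x).
      by rewrite -e2 scA mulVf ?subr_eq0 // sc1.
    exact: sA.
  - move=> w r1 w' r2 [x [r [t [Ax [-> ->]]]]] [x' [r' [t' [Ax' [-> ->]]]]].
    exists (x + x'), (r + r'), (t + t'); split; first exact: aA.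
    by rewrite scDl mulrDl; congr (_, _); rewrite -!addrA; congr (_ + _);
      rewrite addrC -!addrA; congr (_ + _); rewrite addrC.
  - move=> a w r1 [x [r [t [Ax [-> ->]]]]].
    exists (sc a x), (a * r), (a * t); split; first exact: sA.
    by rewrite scD scA mulrDr mulrA.
  - move=> w r1 [x [r [t [Ax [-> ->]]]]].
    have [t0|t0|->] := ltgtP t 0; last by rewrite sc0 mul0r !addr0; exact: dA.
    +
      pose s := - t; have s0 : 0 < s by rewrite oppr_gt0.
      have Ax' := sA s^-1 _ _ Ax.
      have := c1 _ _ Ax'.
      have -> : sc s^-1 x - z = sc s^-1 (x + sc t z).
        by rewrite scD scA /s invrN mulNr mulVf ?ltr0_neq0 // scNx.
      rewrite pZ gtr0_norm ?invr_gt0 // => h.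
      have := ler_wpM2l (ltW s0) h.
      rewrite mulrBr !mulrA mulfV ?gt_eqF // !mul1r /s; lra.
    + have Ax' := sA t^-1 _ _ Ax.
      have := c2 _ _ Ax'.
      have -> : sc t^-1 x + z = sc t^-1 (x + sc t z).
        by rewrite scD scA mulVf ?gt_eqF // sc1.
      rewrite pZ gtr0_norm ?invr_gt0 // => h.
      have := ler_wpM2l (ltW t0) h.
      rewrite mulrBr !mulrA mulfV ?gt_eqF // !mul1r; lra.
pose u z := sval (cid (tot z)).
have uA : forall z, A (z, u z) by move=> z; rewrite /u; case: cid.
exists u; split.
- by move=> x y; apply: fA (uA _) (aA _ _ _ _ (uA x) (uA y)).
- by move=> t x; apply: fA (uA _) (sA _ _ _ (uA x)).
- by move=> x; apply: dA.
- apply: fA (uA _) _.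
  have : A (sc 1 y0, 1 * p y0) by apply: A0A; exists 1.
  by rewrite sc1 mul1r.
Qed.
End HBcore.

Lemma BWR (R : realType) (F : R -> set R) (M : R) :
  (forall d d', 0 < d -> d <= d' -> F d `<=` F d') ->
  (forall d, 0 < d -> exists a, F d a) ->
  (forall d a, 0 < d -> F d a -> `|a| <= M) ->
  exists l, forall d e, 0 < d -> 0 < e -> exists a, F d a /\ `|a - l| < e.
Proof.
move=> mono ne bd.
pose s d := sup (F d).
have hs : forall d, 0 < d -> has_sup (F d).
  move=> d d0; split; first by have [a Fa] := ne d d0; exists a.
  by exists M => a Fa; have := bd _ _ d0 Fa; rewrite ler_norml => /andP[].
have s_ub : forall d a, 0 < d -> F d a -> a <= s d.
  by move=> d a d0 Fa; apply: sup_upper_bound (hs d d0) _ Fa.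
have s_lb : forall d, 0 < d -> - M <= s d.
  move=> d d0; have [a Fa] := ne d d0; apply: le_trans (s_ub _ _ d0 Fa).
  by have := bd _ _ d0 Fa; rewrite ler_norml => /andP[].
have s_mono : forall d d', 0 < d -> d <= d' -> s d <= s d'.
  move=> d d' d0 dd; have d0' := lt_le_trans d0 dd.
  apply: ge_sup; first by have [a Fa] := ne d d0; exists a.
  by move=> a Fa; apply: s_ub d0' _; apply: mono Fa.
pose S := [set s d | d in [set d : R | 0 < d]].
have hS : has_inf S.
  split; first by exists (s 1); exists 1 => //; exact: ltr01.
  by exists (- M) => _ [d d0 <-]; apply: s_lb.
exists (inf S) => d e d0 e0.
have [_ [d' d0' <-] hd'] := inf_adherent e0 hS.
have d00 : 0 < Num.min d d' by rewrite lt_min d0 d0'.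
have [a Fa ha] := sup_adherent e0 (hs _ d00).
exists a; split; first by apply: mono Fa => //; rewrite ge_min lexx.
have h1 := s_ub _ _ d00 Fa.
have h2 : s (Num.min d d') <= s d' by apply: s_mono => //; rewrite ge_min lexx orbT.
have h3 : inf S <= s (Num.min d d') by apply: ge_inf; [case: hS | exists (Num.min d d')].
rewrite ltr_norml; apply/andP; split; rewrite /s in ha h1 h2 h3 hd' *; lra.
Qed.

Section RealInst.
Variable R : realType.

Lemma polarR (l : R) : exists w : R, `|w| = 1 /\ w * l = `|l|.
Proof.
have [l0|l0] := leP 0 l.
  by exists 1; rewrite normr1 mul1r ger0_norm.
by exists (-1); rewrite normrN normr1 mulN1r ltr0_norm.
Qed.

Lemma HBR (Y : normedModType R) (y : Y) : y != 0 -> exists f : Y -> R,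
  [/\ (forall a u v, f (a *: u + v) = a * f u + f v),
      (forall v, `|f v| <= `|v|) & f y = `|y|].
Proof.
move=> _.
have [u [uD uZ up uy]] := @HB_core R Y (fun t v => t *: v) (fun v => `|v|)
  (fun t x y => scalerDr t x y) (fun s t x => scalerDl x s t)
  (fun s t x => scalerA s t x) (fun x => scale1r x) (fun x y => ler_normD x y)
  (fun t x => normrZ t x) y.
exists u; split => //.
- by move=> a x v; rewrite uD uZ.
- move=> v; rewrite ler_norml up andbT.
  have := up (- v); rewrite normrN -scaleN1r uZ; lra.
Qed.

Lemma thmR : @thm3p1_for R R (fun x : R => x).
Proof.
move=> X Y G T bG opG nG bT.
apply: (@main_generic R R (fun x => x) _ _ _ _ _ _ _ (fun x => x)) => //.
- by move=> a; apply: ler_norm.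
- by move=> l; have [w [w1 h]] := polarR l; exists w.
- by move=> F M; apply: BWR.
- by move=> y y0; have [f [lf bf fy]] := HBR y0; exists f.
Qed.
End RealInst.

Section CInst.
Import complex.
Local Open Scope complex_scope.
Variable R : realType.
Local Notation C := (complex.complex R).

Lemma cReD (a b : C) : Re (a + b) = Re a + Re b.
Proof. by case: a; case: b. Qed.
Lemma cImD (a b : C) : Im (a + b) = Im a + Im b.
Proof. by case: a; case: b. Qed.

Lemma cRe_norm (a : C) : Re `|a| = Num.sqrt (Re a ^+ 2 + Im a ^+ 2).
Proof. by rewrite normc_def. Qed.
Lemma cIm_norm (a : C) : Im `|a| = 0.
Proof. by rewrite normc_def. Qed.

Lemma cRe_abs_le (a : C) : `|Re a| <= Re `|a|.
Proof.
rewrite cRe_norm -sqrtr_sqr; apply: ler_wsqrtr; rewrite lerDl; exact: sqr_ge0.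
Qed.
Lemma cIm_abs_le (a : C) : `|Im a| <= Re `|a|.
Proof.
rewrite cRe_norm -sqrtr_sqr; apply: ler_wsqrtr; rewrite lerDr; exact: sqr_ge0.
Qed.
Lemma cRe_le_norm (a : C) : Re a <= Re `|a|.
Proof. exact: le_trans (ler_norm _) (cRe_abs_le a). Qed.

Lemma cnorm_le (a : C) : Re `|a| <= `|Re a| + `|Im a|.
Proof.
rewrite cRe_norm -[X in _ <= X]ger0_norm ?addr_ge0 // -sqrtr_sqr.
apply: ler_wsqrtr.
have hx : `|Re a| ^+ 2 = Re a ^+ 2 by rewrite -normrX ger0_norm ?sqr_ge0.
have hy : `|Im a| ^+ 2 = Im a ^+ 2 by rewrite -normrX ger0_norm ?sqr_ge0.
have := normr_ge0 (Re a); have := normr_ge0 (Im a).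
rewrite -hx -hy; nra.
Qed.

Lemma cre_mono (a b : C) : a <= b -> Re a <= Re b.
Proof. by rewrite lecE => /andP[]. Qed.
Lemma cre_lt (a b : C) : a < b -> Re a < Re b.
Proof. by rewrite ltcE => /andP[]. Qed.
Lemma creM_ge0 (a b : C) : 0 <= a -> 0 <= b -> Re (a * b) = Re a * Re b.
Proof.
move=> ha hb; have ia := ger0_Im ha; have ib := ger0_Im hb.
move: ia ib; case: a {ha} => a1 a2; case: b {hb} => b1 b2 /= -> ->.
by rewrite mulr0 subr0.
Qed.
Lemma cre_lt_conv (a b : C) : 0 <= a -> 0 < b -> Re a < Re b -> a < b.
Proof. by move=> ha hb h; rewrite ltcE (ger0_Im ha) (ger0_Im (ltW hb)) eqxx h. Qed.

Lemma cpolar (l : C) : exists w : C, `|w| = 1 /\ Re (w * l) = Re `|l|.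
Proof.
have [->|l0] := eqVneq l 0; first by exists 1; rewrite normr1 mulr0 normr0.
exists (`|l| / l); split; last by rewrite divfK.
by rewrite normrM normfV normr_id divff // normr_eq0.
Qed.

Lemma cBW (F : R -> set C) (M : R) :
  (forall d d', 0 < d -> d <= d' -> F d `<=` F d') ->
  (forall d, 0 < d -> exists a, F d a) ->
  (forall d a, 0 < d -> F d a -> Re `|a| <= M) ->
  exists l, forall d e, 0 < d -> 0 < e -> exists a, F d a /\ Re `|a - l| < e.
Proof.
move=> mono ne bd.
pose F1 d := [set Re a | a in F d].
have [x0 hx0] : exists l, forall d e, 0 < d -> 0 < e -> exists a, F1 d a /\ `|a - l| < e.
  apply: (BWR (M := M)).
  - by move=> d d' d0 dd _ [a Fa <-]; exists a => //; apply: mono Fa.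
  - by move=> d d0; have [a Fa] := ne d d0; exists (Re a); exists a.
  - by move=> d _ d0 [a Fa <-]; apply: le_trans (cRe_abs_le a) (bd _ _ d0 Fa).
pose F2 d := [set Im a | a in [set a | F d a /\ `|Re a - x0| < d]].
have [y0 hy0] : exists l, forall d e, 0 < d -> 0 < e -> exists a, F2 d a /\ `|a - l| < e.
  apply: (BWR (M := M)).
  - move=> d d' d0 dd _ [a [Fa ha] <-]; exists a => //; split.
      by apply: mono Fa.
    exact: lt_le_trans ha dd.
  - move=> d d0; have [_ [[a Fa <-] ha]] := hx0 d d  d0 d0.
    by exists (Im a); exists a.
  - by move=> d _ d0 [a [Fa _] <-]; apply: le_trans (cIm_abs_le a) (bd _ _ d0 Fa).
exists (Complex x0 y0) => d e d0 e0.
have e20 : 0 < e / 2 by rewrite divr_gt0.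
have d00 : 0 < Num.min d (e / 2) by rewrite lt_min d0 e20.
have [_ [[a [Fa ha] <-] hb]] := hy0 _ _ d00 e20.
exists a; split; first by apply: mono Fa => //; rewrite ge_min lexx.
apply: le_lt_trans (cnorm_le _) _.
have hmin : Num.min d (e / 2) <= e / 2 by rewrite ge_min lexx orbT.
have -> : Re (a - Complex x0 y0) = Re a - x0 by case: a {Fa ha hb}.
have -> : Im (a - Complex x0 y0) = Im a - y0 by case: a {Fa ha hb}.
lra.
Qed.

Lemma rcD (s t : R) : (s + t)%:C = s%:C + t%:C :> C.
Proof. by apply/eqP; rewrite eq_complex /= addr0 !eqxx. Qed.
Lemma rcM (s t : R) : (s * t)%:C = s%:C * t%:C :> C.
Proof. by apply/eqP; rewrite eq_complex /= !mulr0 mul0r subr0 addr0 !eqxx. Qed.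
Lemma rcN1 : (-1 : R)%:C = -1 :> C.
Proof. by apply/eqP; rewrite eq_complex /= oppr0 !eqxx. Qed.
Lemma ii : 'i * 'i = -1 :> C.
Proof. by rewrite -expr2 sqr_i. Qed.
Lemma rc_norm (t : R) : `|t%:C| = `|t|%:C :> C.
Proof. by rewrite normc_def /= expr0n /= addr0 sqrtr_sqr. Qed.
Lemma Re_rcM (t : R) (z : C) : Re (t%:C * z) = t * Re z.
Proof. by case: z => a b /=; rewrite mul0r subr0. Qed.

Lemma cpD (Y : normedModType C) (x y : Y) : Re `|x + y| <= Re `|x| + Re `|y|.
Proof. by rewrite -cReD; apply: cre_mono; apply: ler_normD. Qed.
Lemma cpZ (Y : normedModType C) (t : R) (x : Y) : Re `|t%:C *: x| = `|t| * Re `|x|.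
Proof. by rewrite normrZ rc_norm Re_rcM. Qed.

Lemma HBC (Y : normedModType C) (y : Y) : y != 0 -> exists f : Y -> C,
  [/\ (forall a u v, f (a *: u + v) = a * f u + f v),
      (forall v, `|f v| <= `|v|) & Re (f y) = Re `|y|].
Proof.
move=> y0.
have [u [uD uZ up uy]] := @HB_core R Y (fun t v => t%:C *: v) (fun v => Re `|v|)
  (fun t x y => scalerDr t%:C x y)
  (fun s t x => etrans (congr1 (fun k => k *: x) (rcD s t)) (scalerDl x s%:C t%:C))
  (fun s t x => etrans (scalerA s%:C t%:C x) (congr1 (fun k => k *: x) (esym (rcM s t))))
  (fun x => scale1r x) (@cpD Y) (@cpZ Y) y.
have uN : forall x, u (- x) = - u x.
  by move=> x; have := uZ (-1) x; rewrite rcN1 scaleN1r mulN1r.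
have uaZ : forall a x, u (a *: x) = Re a * u x + Im a * u ('i *: x).
  move=> a x; have -> : a *: x = (Re a)%:C *: x + (Im a)%:C *: ('i *: x).
    by rewrite {1}(complexE a) scalerDl scalerA [(Im a)%:C * _]mulrC.
  by rewrite uD !uZ.
have uiZ : forall a x, u ('i *: (a *: x)) = Re a * u ('i *: x) - Im a * u x.
  move=> a x; rewrite scalerA mulrC -scalerA uaZ scalerA ii scaleN1r uN.
  by rewrite mulrN.
pose f v : C := Complex (u v) (- u ('i *: v)).
have u0 : u 0 = 0 by have := uD 0 0; rewrite addr0 => /eqP; rewrite -subr_eq subrr eq_sym => /eqP.
have lf : forall a x v, f (a *: x + v) = a * f x + f v.
  move=> a x v; rewrite /f scalerDr !uD uaZ uiZ.
  case: a => al be /=; apply/eqP; rewrite eq_complex /=; apply/andP; split; apply/eqP; ring.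
have f0 : f 0 = 0 by rewrite /f scaler0 u0 oppr0.
have fZ : forall a x, f (a *: x) = a * f x.
  by move=> a x; have := lf a x 0; rewrite addr0 f0 addr0.
exists f; split => //.
move=> v; have [fv0|fv0] := eqVneq (f v) 0; first by rewrite fv0 normr0.
pose w := `|f v| / f v.
have w1 : `|w| = 1 by rewrite /w normrM normfV normr_id divff // normr_eq0.
have fw : f (w *: v) = `|f v| by rewrite fZ /w divfK.
have h : Re `|f v| <= Re `|v|.
  have : Re (f (w *: v)) <= Re `|w *: v| by apply: up.
  by rewrite fw normrZ w1 mul1r.
by rewrite lecE cIm_norm (ger0_Im (normr_ge0 v)) eqxx h.
Qed.

Lemma thmC : @thm3p1_for R C (@complex.Re R).
Proof.
move=> X Y G T bG opG nG bT.
apply: (@main_generic R C (@complex.Re R) _ _ _ _ _ _ _ (fun x => x%:C)) => //.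
- exact: cReD.
- exact: cRe_le_norm.
- exact: cre_mono.
- exact: cre_lt.
- exact: creM_ge0.
- exact: cre_lt_conv.
- by move=> e e0; rewrite ltcR.
- exact: cpolar.
- exact: cBW.
- by move=> y y0; have [f [lf bf fy]] := HBC y0; exists f.
Qed.
End CInst.

Theorem theorem3p1 (R : realType) :
  @thm3p1_for R R (fun x : R => x) /\
  @thm3p1_for R (complex.complex R) (@complex.Re R).
Proof. by split; [apply: thmR | apply: thmC]. Qed.
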